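(* Let $L$ be a slim semimodular lattice of length $n$ and let $D$ be a planar diagram of $L$ with left boundary chain $0=c_0\prec\dots\prec c_n=1$ and right boundary chain $0=d_0\prec\dots\prec d_n=1$. Let $\pi_1,\pi_2,\pi_3$ be the permutations associated with $D$ as defined below. Then $\pi_1=\pi_2=\pi_3$.
   Context: A finite lattice is slim if its join-irreducible elements (including $0$) contain no three-element antichain; semimodular means $a\prec b$ implies $a\vee c\preceq b\vee c$. Slim lattices are planar; in a planar diagram of a slim semimodular lattice all cells (minimal regions bounded by edges) are 4-cells, i.e. four-element cover-preserving sublattices of length 2. Diagrams are considered up to boundary similarity (an isomorphism preserving left and right boundary chains). $\pi_1$: for $i\in\{1,\dots,n\}$ let $I_0=[c_{i-1},c_i]$; if $I_t$ is defined and is the left-hand (lower or upper) edge of a 4-cell lying to its right, let $I_{t+1}$ be the opposite edge of that 4-cell; the sequence $I_0,\dots,I_m$ (the trajectory) ends on the right boundary chain at $I_m=[d_{j-1},d_j]$, and $\pi_1(i)=j$ (this is known to be well defined and a permutation). $\pi_2$: for $i\in\{1,\dots,n\}$ take a meet-irreducible $u\in L$, $u\neq1$, such that $c_i$ is the smallest element of the left boundary chain not $\le u$; let $d_j$ be the smallest element of the right boundary chain not $\le u$; $\pi_2(i)=j$. $\pi_3$: let $G$ be the direct product of the chains $\{c_0,\dots,c_n\}$ and $\{d_0,\dots,d_n\}$, writing $c_i\vee d_j$ for the pair $(c_i,d_j)$; let $\eta\colon G\to L$, $c_i\vee_G d_j\mapsto c_i\vee_L d_j$, and let $\beta_D$ be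 the kernel of $\eta$. For a join-congruence $\alpha$ of $G$ and $i,j\ge1$, the 4-cell $\{c_{i-1}\vee d_{j-1},c_{i-1}\vee d_j,c_i\vee d_{j-1},c_i\vee d_j\}$ is a source cell of $\alpha$ if $c_{i-1}\vee d_j$, $c_i\vee d_{j-1}$, $c_i\vee d_j$ lie in one $\alpha$-class not containing $c_{i-1}\vee d_{j-1}$. $\pi_3(i)=j$ iff the 4-cell with top $c_i\vee d_j$ is a source cell of $\beta_D$. *)

(* Defs.v *)
From HB Require Import structures.
From mathcomp Require Import all_boot all_order all_fingroup.
Set Implicit Arguments. Unset Strict Implicit. Unset Printing Implicit Defensive.
Import Order.Theory.
Local Open Scope order_scope.

Section LatticeNotions.
Context {disp : Order.disp_t} {T : tbLatticeType disp}.

Definition covers (x y : T) : Prop := x < y /\ forall z, ~ (x < z /\ z < y).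

Definition incomp (x y : T) : Prop := ~ (x <= y) /\ ~ (y <= x).

(* join-irreducible; with this convention 0 is join-irreducible, as in the paper *)
Definition join_irr (x : T) : Prop := forall y z, x = y `|` z -> x = y \/ x = z.

(* meet-irreducible (1 satisfies this trivially; the paper adds u <> 1 separately) *)
Definition meet_irr (x : T) : Prop := forall y z, x = y `&` z -> x = y \/ x = z.

Definition slim : Prop :=
  forall x y z, join_irr x -> join_irr y -> join_irr z ->
    ~ (incomp x y /\ incomp y z /\ incomp x z).

Definition semimodular : Prop :=
  forall a b c, covers a b -> covers (a `|` c) (b `|` c) \/ a `|` c = b `|` c.

Definition lattice_length (n : nat) : Prop :=
  (exists s : seq T, sorted <%O s /\ size s = n.+1) /\
  (forall s : seq T, sorted <%O s -> (size s <= n.+1)%N).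

(* A planar diagram up to (boundary) similarity, encoded by its left-right
   relation: [lr x y] means "x is strictly to the left of y" (only for
   incomparable x, y).  lr must be total and asymmetric on incomparable pairs,
   and both (<=) ∪ lr and (<=) ∪ lr^{-1} must be transitive (Kelly–Rival). *)
Definition planar_diagram (lr : T -> T -> Prop) : Prop :=
  [/\ (forall x y, lr x y -> incomp x y),
      (forall x y, incomp x y -> lr x y \/ lr y x),
      (forall x y, ~ (lr x y /\ lr y x)),
      (forall x y z, (x <= y \/ lr x y) -> (y <= z \/ lr y z) -> (x <= z \/ lr x z))
    & (forall x y z, (x <= y \/ lr y x) -> (y <= z \/ lr z y) -> (x <= z \/ lr z x))].

Definition left_boundary (lr : T -> T -> Prop) (c : nat -> T) (n : nat) : Prop :=
  [/\ c 0%N = \bot, c n = \top,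
      (forall k, (k < n)%N -> covers (c k) (c k.+1))
    & (forall k y, (k <= n)%N -> incomp (c k) y -> lr (c k) y)].

Definition right_boundary (lr : T -> T -> Prop) (d : nat -> T) (n : nat) : Prop :=
  [/\ d 0%N = \bot, d n = \top,
      (forall k, (k < n)%N -> covers (d k) (d k.+1))
    & (forall k y, (k <= n)%N -> incomp (d k) y -> lr y (d k))].

(* A (4-)cell of the diagram with bottom o, left corner a, right corner b, top t:
   a covering square with a to the left of b and no element inside the region. *)
Definition cell (lr : T -> T -> Prop) (o a b t : T) : Prop :=
  [/\ covers o a, covers a t, covers o b, covers b t
    & lr a b /\ forall x, o < x -> x < t -> x <> a -> x <> b -> ~ (lr a x /\ lr x b)].

(* one step of a trajectory: e is the left-hand (lower or upper) edge of a
   4-cell lying to its right, and e' is the opposite edge of that cell *)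
Definition traj_step (lr : T -> T -> Prop) (e e' : T * T) : Prop :=
  exists o a b t, cell lr o a b t /\
    ((e = (o, a) /\ e' = (b, t)) \/ (e = (a, t) /\ e' = (o, b))).

Definition pi1_rel (lr : T -> T -> Prop) (c d : nat -> T) (i j : nat) : Prop :=
  exists es : seq (T * T),
    let e0 := (c i.-1, c i) in
    [/\ (forall k, (k < size es)%N ->
           traj_step lr (nth e0 (e0 :: es) k) (nth e0 es k)),
        last e0 es = (d j.-1, d j)
      & forall e', ~ traj_step lr (last e0 es) e'].

Definition smallest_not_le (c : nat -> T) (n : nat) (u : T) (i : nat) : Prop :=
  [/\ (i <= n)%N, ~ (c i <= u) & forall k, (k < i)%N -> c k <= u].

Definition pi2_rel (c d : nat -> T) (n i j : nat) : Prop :=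
  exists u : T, [/\ meet_irr u, u <> \top,
                    smallest_not_le c n u i & smallest_not_le d n u j].

(* G = chain {c_0..c_n} × chain {d_0..d_n}; the pair (i, j) stands for c_i ∨_G d_j *)
Definition eta (c d : nat -> T) (p : nat * nat) : T := c p.1 `|` d p.2.

Definition beta_D (c d : nat -> T) (p q : nat * nat) : Prop := eta c d p = eta c d q.

End LatticeNotions.

Definition source_cell (alpha : nat * nat -> nat * nat -> Prop) (i j : nat) : Prop :=
  [/\ (1 <= i)%N, (1 <= j)%N,
      alpha (i.-1, j) (i, j), alpha (i, j.-1) (i, j)
    & ~ alpha (i.-1, j.-1) (i, j)].

Definition pi3_rel {disp : Order.disp_t} {T : tbLatticeType disp}
  (c d : nat -> T) (i j : nat) : Prop := source_cell (beta_D c d) i j.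

(* Main.v *)
Require Import Defs.
From HB Require Import structures.
From mathcomp Require Import all_boot all_order all_fingroup.
Import Order.Theory.
Local Open Scope order_scope.
Set Implicit Arguments. Unset Strict Implicit.

Lemma cov_le disp (L : finTBLatticeType disp) (x y : L) : covers x y -> x <= y.
Proof. by case=> /ltW. Qed.

Lemma cov_neq disp (L : finTBLatticeType disp) (x y : L) : covers x y -> x != y.
Proof. by case=> xy _; move: xy; rewrite lt_neqAle => /andP[]. Qed.

Lemma cov_mid disp (L : finTBLatticeType disp) (x y z : L) :
  covers x y -> x <= z -> z <= y -> z = x \/ z = y.
Proof.
case=> _ H xz zy; have [->|nx] := eqVneq z x; first by left.
have [->|ny] := eqVneq z y; first by right.
by exfalso; apply: (H z); split; [rewrite lt_def nx xz | rewrite lt_neqAle ny zy].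
Qed.

Lemma mk_cov disp (L : finTBLatticeType disp) (x y : L) :
  x <= y -> x != y -> (forall z, x <= z -> z <= y -> z = x \/ z = y) -> covers x y.
Proof.
move=> xy nxy H; split; first by rewrite lt_neqAle nxy.
move=> z [xz zy]; have [E|E] := H z (ltW xz) (ltW zy).
  by move: xz; rewrite E ltxx.
by move: zy; rewrite E ltxx.
Qed.

Lemma cov_cov_le disp (L : finTBLatticeType disp) (o a b : L) :
  covers o a -> covers o b -> a <= b -> a = b.
Proof.
move=> oa ob ab; have [E|//] := cov_mid ob (cov_le oa) ab.
by move: (cov_neq oa); rewrite E eqxx.
Qed.

Lemma cov_meet disp (L : finTBLatticeType disp) (o a w : L) :
  covers o a -> o <= w -> ~~ (a <= w) -> a `&` w <= o.
Proof.
move=> oa ow aw.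
have ow' : o <= a `&` w by rewrite lexI (cov_le oa) ow.
have [->|E] := cov_mid oa ow' (leIl a w); first by [].
by move: (leIr w a); rewrite E (negbTE aw).
Qed.

Lemma ji_below disp (L : finTBLatticeType disp) (a o : L) :
  ~~ (a <= o) -> exists z, [/\ join_irr z, z <= a & ~~ (z <= o)].
Proof.
move=> ao.
pose S := [pred z : L | (z <= a) && ~~ (z <= o)].
have Sa : S a by rewrite /S /= lexx.
pose dn (z : L) := #|[set y : L | y <= z]|.
have dnlt : forall y z : L, y < z -> (dn y < dn z)%N.
  move=> y z yz; apply: proper_card; apply/properP; split.
    by apply/subsetP=> v; rewrite !inE => vy; apply: le_trans vy (ltW yz).
  by exists z; rewrite !inE ?lexx ?(lt_geF yz).
case: (arg_minnP dn Sa) => z /andP[za zo] zmin.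
exists z; split=> //.
move=> y w E.
have [->|ny] := eqVneq z y; first by left.
have [->|nw] := eqVneq z w; first by right.
exfalso.
have yz : y < z by rewrite lt_def ny E leUl.
have wz : w < z by rewrite lt_def nw E leUr.
have yo : y <= o.
  apply: contraTT (dnlt _ _ yz) => yo; rewrite -leqNgt; apply: zmin.
  by rewrite /S /= yo (le_trans (ltW yz) za).
have wo : w <= o.
  apply: contraTT (dnlt _ _ wz) => wo; rewrite -leqNgt; apply: zmin.
  by rewrite /S /= wo (le_trans (ltW wz) za).
by move: zo; rewrite E leUx yo wo.
Qed.

Lemma inc_help disp (L : finTBLatticeType disp) (o p q u v : L) :
  p <= u -> q <= v -> u `&` v <= o -> ~~ (p <= o) -> ~~ (q <= o) -> incomp p q.
Proof.
move=> pu qv uvo po qo; split=> H.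
  by move/negP: po; apply; apply: le_trans uvo; rewrite lexI pu (le_trans H qv).
by move/negP: qo; apply; apply: le_trans uvo; rewrite lexI (le_trans H pu) qv.
Qed.

Lemma slim3g disp (L : finTBLatticeType disp) : slim (T := L) ->
  forall o x y z : L, x `&` y <= o -> y `&` z <= o -> x `&` z <= o ->
  ~~ (x <= o) -> ~~ (y <= o) -> ~~ (z <= o) -> False.
Proof.
move=> sl o x y z xy yz xz xo yo zo.
have [jx [jxi jxx jxo]] := ji_below xo.
have [jy [jyi jyy jyo]] := ji_below yo.
have [jz [jzi jzz jzo]] := ji_below zo.
apply: (sl jx jy jz jxi jyi jzi); split; [|split].
- exact: inc_help jxx jyy xy jxo jyo.
- exact: inc_help jyy jzz yz jyo jzo.
- exact: inc_help jxx jzz xz jxo jzo.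
Qed.

Lemma cov_lt disp (L : finTBLatticeType disp) (x y : L) : covers x y -> x < y.
Proof. by case. Qed.

Lemma cov_ab disp (L : finTBLatticeType disp) (o a b : L) :
  covers o a -> covers o b -> a != b -> ~~ (a <= b).
Proof. by move=> oa ob nab; apply/negP=> ab; move/eqP: nab; apply; apply: cov_cov_le ob ab. Qed.

Lemma slim3 disp (L : finTBLatticeType disp) (sl : slim (T := L))
  (o a b w : L) : covers o a -> covers o b -> a != b -> o < w ->
  ~~ (a <= w) -> ~~ (b <= w) -> False.
Proof.
move=> oa ob nab ow aw bw.
apply: (slim3g sl (o := o) (x := a) (y := b) (z := w)).
- exact: cov_meet oa (cov_le ob) (cov_ab oa ob nab).
- exact: cov_meet ob (ltW ow) bw.
- exact: cov_meet oa (ltW ow) aw.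
- by rewrite (lt_geF (cov_lt oa)).
- by rewrite (lt_geF (cov_lt ob)).
- by rewrite (lt_geF ow).
Qed.

Lemma core disp (L : finTBLatticeType disp) (sl : slim (T := L))
  (o x y w : L) : covers o x -> covers o y -> x != y ->
  y <= x `|` w -> y <= o `|` w.
Proof.
move=> ox oy nxy yxw.
set W := o `|` w.
apply/negPn/negP => yW.
have xW : ~~ (x <= W).
  apply/negP=> xW; move/negP: yW; apply.
  have h : x `|` w <= W by rewrite leUx xW /W leUr.
  exact: le_trans yxw h.
have oW : o <= W by rewrite /W leUl.
have [EW|nW] := eqVneq W o.
  have yx : y <= x.
    have h : x `|` w <= x.
      rewrite leUx lexx /=.
      have h2 : w <= o by rewrite -EW /W leUr.
      exact: le_trans h2 (cov_le ox).
    exact: le_trans yxw h.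
  by move/eqP: nxy; apply; apply/esym; apply: cov_cov_le oy ox yx.
have oltW : o < W by rewrite lt_def nW oW.
exact: (slim3 sl ox oy nxy oltW xW (negbT (negPf yW))).
Qed.

Lemma eqj disp (L : finTBLatticeType disp) (x y w : L) :
  x <= y -> (x `|` w == y `|` w) = (y <= x `|` w).
Proof.
move=> xy; apply/eqP/idP => [E|H]; first by rewrite E leUl.
apply: le_anti; rewrite !leUx H leUr (le_trans xy (leUl _ _)) leUr.
by [].
Qed.

Lemma lr_neq disp (L : finTBLatticeType disp) (lr : L -> L -> Prop) :
  planar_diagram lr -> forall x y, lr x y -> x != y.
Proof.
case=> H _ _ _ _ x y /H [] xy _; apply/eqP=> E; apply: xy; by rewrite E.
Qed.

Lemma cell_top disp (L : finTBLatticeType disp) (a b t : L) :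
  covers a t -> covers b t -> a != b -> a `|` b = t.
Proof.
move=> at' bt nab.
have abt : a `|` b <= t by rewrite leUx (cov_le at') (cov_le bt).
have [E|//] := cov_mid at' (leUl a b) abt.
have ba : b <= a by rewrite -E leUr.
have [E2|E2] := cov_mid bt ba (cov_le at').
  by move/eqP: nab; rewrite E2.
by move: (cov_neq at'); rewrite E2 eqxx.
Qed.

Lemma step_inv disp (L : finTBLatticeType disp) (lr : L -> L -> Prop) :
  slim (T := L) -> planar_diagram lr ->
  forall e e' w, traj_step lr e e' ->
  (e.1 `|` w == e.2 `|` w) = (e'.1 `|` w == e'.2 `|` w).
Proof.
move=> sl pd e e' w [o [a [b [t [[oa at' ob bt [lab _]] He]]]]].
have nab := lr_neq pd lab.
have tE := cell_top at' bt nab.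
case: He => [[-> ->]|[-> ->]] /=.
- rewrite (eqj w (cov_le oa)) (eqj w (cov_le bt)) -tE leUx leUl andbT.
  apply/idP/idP => H.
    by apply: le_trans H _; rewrite leUx leUr (le_trans (cov_le ob) (leUl _ _)).
  have nba : b != a by rewrite eq_sym.
  exact: (core sl ob oa nba H).
- rewrite (eqj w (cov_le at')) (eqj w (cov_le ob)) -tE leUx leUl /=.
  apply/idP/idP => H.
    exact: (core sl oa ob nab H).
  by apply: le_trans H _; rewrite leUx leUr (le_trans (cov_le oa) (leUl _ _)).
Qed.

Definition chain_ok disp (L : finTBLatticeType disp) (c : nat -> L) (n : nat) :=
  [/\ c 0%N = \bot, c n = \top & forall k, (k < n)%N -> covers (c k) (c k.+1)].

Lemma lb_chain disp (L : finTBLatticeType disp) lr (c : nat -> L) n :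
  left_boundary lr c n -> chain_ok c n.
Proof. by case. Qed.

Lemma rb_chain disp (L : finTBLatticeType disp) lr (c : nat -> L) n :
  right_boundary lr c n -> chain_ok c n.
Proof. by case. Qed.

Lemma chain_mono disp (L : finTBLatticeType disp) (c : nat -> L) n :
  chain_ok c n -> forall i j, (i <= j)%N -> (j <= n)%N -> c i <= c j.
Proof.
case=> _ _ cv i j ij jn; elim: j ij jn => [|j IH] ij jn.
  by move: ij; rewrite leqn0 => /eqP ->.
move: ij; rewrite leq_eqVlt => /orP[/eqP -> //|ij].
apply: le_trans (IH ij (ltnW jn)) (cov_le (cv j jn)).
Qed.

Lemma sm_step disp (L : finTBLatticeType disp) (sm : semimodular (T := L)) (a b z : L) :
  covers a b -> a `|` z <= b `|` z /\ (a `|` z != b `|` z -> covers (a `|` z) (b `|` z)).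
Proof.
move=> ab; split; first by rewrite leUx leUr (le_trans (cov_le ab) (leUl _ _)).
by case: (sm a b z ab) => [//|->]; rewrite eqxx.
Qed.

Lemma sq_gen disp (L : finTBLatticeType disp) (p q r t : L) :
  p <= q -> p <= r -> q <= t -> r <= t ->
  (p != q -> covers p q) -> (p != r -> covers p r) ->
  (p = q -> r = t) -> (p = r -> q = t) ->
  ((p != q) + (q != t) = (p != r) + (r != t))%N.
Proof.
move=> pq pr qt rt cq cr H1 H2.
have [E|npq] := eqVneq p q.
  by rewrite -(H1 E) -E !eqxx addn0.
have [E|npr] := eqVneq p r.
  by rewrite -(H2 E) -E npq !eqxx.
have cpq := cq npq; have cpr := cr npr.
suff -> : (q != t) = (r != t) by [].
apply/negb_inj; rewrite !negbK; apply/eqP/eqP => E.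
  have rq : r <= q by rewrite E.
  have [E2|E2] := cov_mid cpq pr rq.
    by move/eqP: npr; rewrite E2.
  by rewrite E2.
have qr : q <= r by rewrite E.
have [E2|E2] := cov_mid cpr pq qr.
  by move/eqP: npq; rewrite E2.
by rewrite E2.
Qed.

Definition E disp (L : finTBLatticeType disp) (c d : nat -> L) i j := c i `|` d j.

Lemma Erow disp (L : finTBLatticeType disp) (c d : nat -> L) i j :
  c i <= c i.+1 -> E c d i.+1 j = E c d i j `|` c i.+1.
Proof. by move=> h; rewrite /E joinAC (join_idPr h). Qed.

Lemma Ecol disp (L : finTBLatticeType disp) (c d : nat -> L) i j :
  d j <= d j.+1 -> E c d i j.+1 = E c d i j `|` d j.+1.
Proof. by move=> h; rewrite /E -joinA (join_idPr h). Qed.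

Lemma Erstep disp (L : finTBLatticeType disp) (sm : semimodular (T := L)) (c d : nat -> L) n i j :
  chain_ok c n -> (i < n)%N ->
  E c d i j <= E c d i.+1 j /\ (E c d i j != E c d i.+1 j -> covers (E c d i j) (E c d i.+1 j)).
Proof. by case=> _ _ cv ilt; rewrite /E; exact: (sm_step sm (d j) (cv i ilt)). Qed.

Lemma Ecstep disp (L : finTBLatticeType disp) (sm : semimodular (T := L)) (c d : nat -> L) n i j :
  chain_ok d n -> (j < n)%N ->
  E c d i j <= E c d i j.+1 /\ (E c d i j != E c d i j.+1 -> covers (E c d i j) (E c d i j.+1)).
Proof. by case=> _ _ cv jlt; have := sm_step sm (c i) (cv j jlt); rewrite /E ![_ `|` c i]joinC. Qed.

Lemma grid_sq disp (L : finTBLatticeType disp) (sm : semimodular (T := L)) (c d : nat -> L) n i j :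
  chain_ok c n -> chain_ok d n -> (i < n)%N -> (j < n)%N ->
  ((E c d i j != E c d i.+1 j) + (E c d i.+1 j != E c d i.+1 j.+1) =
   (E c d i j != E c d i j.+1) + (E c d i j.+1 != E c d i.+1 j.+1))%N.
Proof.
move=> hc hd ilt jlt.
have cle : c i <= c i.+1 by case: hc => _ _ cv; exact: cov_le (cv i ilt).
have dle : d j <= d j.+1 by case: hd => _ _ cv; exact: cov_le (cv j jlt).
have [pq cq] := Erstep sm d j hc ilt.
have [pr cr] := Ecstep sm c i hd jlt.
have [qt _] := Ecstep sm c i.+1 hd jlt.
have [rt _] := Erstep sm d j.+1 hc ilt.
apply: sq_gen pq pr qt rt cq cr _ _.
  by move=> H; rewrite (Ecol _ _ dle) (Ecol _ _ dle) H.
by move=> H; rewrite (Erow _ _ cle) (Erow _ _ cle) H.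
Qed.

Definition Q disp (L : finTBLatticeType disp) (c d : nat -> L) (i j : nat) : bool :=
  (E c d i j != E c d i.+1 j) && (E c d i j.+1 == E c d i.+1 j.+1).

Lemma boolsq (a b c e : bool) : (a + b = c + e)%N -> a && ~~ e -> c && ~~ b.
Proof. by case: a; case: b; case: c; case: e. Qed.

Lemma boolsq2 (a b c e : bool) : (a + b = c + e)%N -> c && ~~ b -> a && ~~ e.
Proof. by case: a; case: b; case: c; case: e. Qed.

Lemma QC disp (L : finTBLatticeType disp) (sm : semimodular (T := L)) (c d : nat -> L) n i j :
  chain_ok c n -> chain_ok d n -> (i < n)%N -> (j < n)%N ->
  Q c d i j = (E c d i j != E c d i j.+1) && (E c d i.+1 j == E c d i.+1 j.+1).
Proof.
move=> hc hd ilt jlt; have H := grid_sq sm hc hd ilt jlt.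
rewrite /Q -[E c d i j.+1 == _]negbK -[E c d i.+1 j == _]negbK.
apply/idP/idP; [exact: boolsq H | exact: boolsq2 H].
Qed.

Lemma Rmono disp (L : finTBLatticeType disp) (c d : nat -> L) n i j j' :
  chain_ok d n -> (j <= j')%N -> (j' <= n)%N ->
  E c d i j = E c d i.+1 j -> E c d i j' = E c d i.+1 j'.
Proof.
case=> _ _ cv jj' j'n; elim: j' jj' j'n => [|j' IH] jj' j'n.
  by move: jj'; rewrite leqn0 => /eqP ->.
move: jj'; rewrite leq_eqVlt => /orP[/eqP -> //|jj'] H.
have dle : d j' <= d j'.+1 by exact: cov_le (cv j' j'n).
by rewrite (Ecol _ _ dle) (Ecol _ _ dle) (IH jj' (ltnW j'n) H).
Qed.

Lemma Cmono disp (L : finTBLatticeType disp) (c d : nat -> L) n i i' j :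
  chain_ok c n -> (i <= i')%N -> (i' <= n)%N ->
  E c d i j = E c d i j.+1 -> E c d i' j = E c d i' j.+1.
Proof.
case=> _ _ cv ii' i'n; elim: i' ii' i'n => [|i' IH] ii' i'n.
  by move: ii'; rewrite leqn0 => /eqP ->.
move: ii'; rewrite leq_eqVlt => /orP[/eqP -> //|ii'] H.
have cle : c i' <= c i'.+1 by exact: cov_le (cv i' i'n).
by rewrite (Erow _ _ cle) (Erow _ _ cle) (IH ii' (ltnW i'n) H).
Qed.

Lemma Qrow disp (L : finTBLatticeType disp) (c d : nat -> L) n i j j' :
  chain_ok d n -> (j < n)%N -> (j' < n)%N -> Q c d i j -> Q c d i j' -> j = j'.
Proof.
move=> hd jn j'n /andP[a1 /eqP b1] /andP[a2 /eqP b2].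
have [jj'|j'j|//] := ltngtP j j'.
  by move/eqP: a2; case; apply: Rmono hd jj' (ltnW j'n) b1.
by move/eqP: a1; case; apply: Rmono hd j'j (ltnW jn) b2.
Qed.

Lemma Qcol disp (L : finTBLatticeType disp) (sm : semimodular (T := L)) (c d : nat -> L) n i i' j :
  chain_ok c n -> chain_ok d n -> (i < n)%N -> (i' < n)%N -> (j < n)%N ->
  Q c d i j -> Q c d i' j -> i = i'.
Proof.
move=> hc hd iн i'n jn.
rewrite (QC sm hc hd iн jn) (QC sm hc hd i'n jn).
move=> /andP[a1 /eqP b1] /andP[a2 /eqP b2].
have [ii'|i'i|//] := ltngtP i i'.
  by move/eqP: a2; case; apply: Cmono hc ii' (ltnW i'n) b1.
by move/eqP: a1; case; apply: Cmono hc i'i (ltnW iн) b2.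
Qed.

Lemma thresh (f : nat -> bool) n : f 0%N -> ~~ f n -> exists2 j, (j < n)%N & f j && ~~ f j.+1.
Proof.
elim: n => [->//|n IH] f0 fn.
case fnn: (f n).
  by exists n => //; rewrite fnn.
have [j jn H] := IH f0 (negbT fnn).
by exists j => //; apply: ltnW.
Qed.

Lemma Qex disp (L : finTBLatticeType disp) (c d : nat -> L) n i :
  chain_ok c n -> chain_ok d n -> (i < n)%N -> exists2 j, (j < n)%N & Q c d i j.
Proof.
move=> [c0 cn cv] [d0 dn dv] ilt.
pose f := fun k => E c d i k != E c d i.+1 k.
have h0 : f 0%N by rewrite /f /E d0 !joinx0 (cov_neq (cv i ilt)).
have hn : ~~ f n by rewrite /f /E dn !joinx1 eqxx.
have [j jn H] := thresh h0 hn.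
by exists j => //; rewrite /Q -[E c d i j.+1 == _]negbK.
Qed.

Lemma pi3_iff disp (L : finTBLatticeType disp) (sm : semimodular (T := L)) (c d : nat -> L) n i j :
  chain_ok c n -> chain_ok d n -> (i < n)%N -> (j < n)%N ->
  pi3_rel c d i.+1 j.+1 <-> Q c d i j.
Proof.
move=> hc hd ilt jlt; have QCe := QC sm hc hd ilt jlt.
rewrite /pi3_rel /source_cell /beta_D /Defs.eta /=.
split.
  case=> _ _ h1 h2 h3; rewrite /Q /E h1 eqxx andbT.
  by rewrite h2; apply/eqP.
move=> hQ; have := hQ; rewrite QCe => /andP[_ /eqP h2].
move: hQ => /andP[h0 /eqP h1]; split=> //.
have h2' : c i.+1 `|` d j = c i.+1 `|` d j.+1 := h2.
by move=> h; move/eqP: h0; apply; rewrite /E h h2'.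
Qed.

Lemma dn_lt disp (L : finTBLatticeType disp) (y z : L) :
  y < z -> (#|[set v : L | (v <= y)%O]| < #|[set v : L | (v <= z)%O]|)%N.
Proof.
move=> yz; apply: proper_card; apply/properP; split.
  by apply/subsetP=> v; rewrite !inE => vy; apply: le_trans vy (ltW yz).
by exists z; rewrite !inE ?lexx ?(lt_geF yz).
Qed.

Lemma pi2_fwd disp (L : finTBLatticeType disp) (sl : slim (T := L)) (sm : semimodular (T := L))
  (c d : nat -> L) n i j :
  chain_ok c n -> chain_ok d n -> (i < n)%N -> (j < n)%N ->
  pi2_rel c d n i.+1 j.+1 -> Q c d i j.
Proof.
move=> hc hd ilt jlt [u [mi ut [_ ci1 cil] [_ dj1 djl]]].
have ciu : c i <= u by apply: cil.
have dju : d j <= u by apply: djl.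
have pu : E c d i j <= u by rewrite /E leUx ciu dju.
have qu : ~~ (E c d i.+1 j <= u).
  by apply/negP=> h; apply: ci1; apply: le_trans h; rewrite /E leUl.
have ru : ~~ (E c d i j.+1 <= u).
  by apply/negP=> h; apply: dj1; apply: le_trans h; rewrite /E leUr.
have npq : E c d i j != E c d i.+1 j.
  by apply/eqP=> h; move/negP: qu; apply; rewrite -h.
have npr : E c d i j != E c d i j.+1.
  by apply/eqP=> h; move/negP: ru; apply; rewrite -h.
have [_ cq] := Erstep sm d j hc ilt.
have [_ cr] := Ecstep sm c i hd jlt.
have pq := cq npq; have pr := cr npr.
have qr : E c d i.+1 j = E c d i j.+1.
  apply/eqP/negPn/negP => nqr.
  have [pE|npu] := eqVneq (E c d i j) u.
    have mE : u = E c d i.+1 j `&` E c d i j.+1.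
      apply: le_anti; rewrite -pE lexI (cov_le pq) (cov_le pr) /=.
      exact: cov_meet pq (cov_le pr) (cov_ab pq pr nqr).
    by case: (mi _ _ mE) => h; [move/negP: qu | move/negP: ru]; apply; rewrite -h.
  have plu : E c d i j < u by rewrite lt_def eq_sym npu pu.
  exact: (slim3 sl pq pr nqr plu qu ru).
rewrite /Q npq /=.
have dle : d j <= d j.+1 by case: hd => _ _ cv; exact: cov_le (cv j jlt).
rewrite (Ecol c i.+1 dle) qr.
by apply/eqP/esym/join_idPl; rewrite /E leUr.
Qed.

Lemma pi2_bwd disp (L : finTBLatticeType disp) (sl : slim (T := L)) (sm : semimodular (T := L))
  (c d : nat -> L) n i j :
  chain_ok c n -> chain_ok d n -> (i < n)%N -> (j < n)%N ->
  Q c d i j -> pi2_rel c d n i.+1 j.+1.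
Proof.
move=> hc hd ilt jlt hQ.
have hc' := hc; case: hc' => c0 cn cv.
have hd' := hd; case: hd' => d0 dn dv.
pose S := [pred x : L | (c i <= x) && ~~ (c i.+1 <= x)].
have Sci : S (c i) by rewrite /S /= lexx (lt_geF (cov_lt (cv i ilt))).
pose dn' (z : L) := #|[set y : L | y <= z]|.
case: (arg_maxnP dn' Sci) => u /andP[ciu ci1u] umax.
have mi : meet_irr u.
  move=> y z Ez.
  have [->|ny] := eqVneq u y; first by left.
  have [->|nz] := eqVneq u z; first by right.
  exfalso.
  have uy : u < y by rewrite lt_def eq_sym ny Ez leIl.
  have uz : u < z by rewrite lt_def eq_sym nz Ez leIr.
  have ySn : ~~ S y.
    apply/negP=> Sy; have h1 := umax y Sy; have h2 := dn_lt uy.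
    by move: h1; rewrite /dn' /= leqNgt h2.
  have zSn : ~~ S z.
    apply/negP=> Sz; have h1 := umax z Sz; have h2 := dn_lt uz.
    by move: h1; rewrite /dn' /= leqNgt h2.
  move: ySn zSn; rewrite /S /= (le_trans ciu (ltW uy)) (le_trans ciu (ltW uz)) /= !negbK.
  by move=> h1 h2; move/negP: ci1u; apply; rewrite Ez lexI h1 h2.
have ut : u <> \top by move=> E'; move/negP: ci1u; apply; rewrite E' lex1.
have exP : exists k, ~~ (d k <= u) by exists n; rewrite dn; apply/negP=> h; apply: ut; apply/le_anti; rewrite h lex1.
case: (ex_minnP exP) => k dk kmin.
have kn : (k <= n)%N by apply: kmin; rewrite dn; apply/negP=> h; apply: ut; apply/le_anti; rewrite h lex1.
case: k dk kmin kn => [|k] dk kmin kn; first by move: dk; rewrite d0 le0x.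
have sc : smallest_not_le c n u i.+1.
  split=> //; first by apply/negP.
  move=> k' k'lt; have kk : (k' <= i)%N by rewrite -ltnS.
  exact: (le_trans (chain_mono hc kk (ltnW ilt)) ciu).
have sd : smallest_not_le d n u k.+1.
  split=> //; first by apply/negP.
  move=> k' k'lt; apply/negPn/negP => h; have := kmin k' h; by rewrite leqNgt k'lt.
have Hk : pi2_rel c d n i.+1 k.+1 by exists u.
have Qk := pi2_fwd sl sm hc hd ilt kn Hk.
by rewrite (Qrow hd jlt kn hQ Qk).
Qed.

Lemma incompC disp (L : finTBLatticeType disp) (x y : L) : incomp x y -> incomp y x.
Proof. by case=> h1 h2; split. Qed.

Lemma G1 disp (L : finTBLatticeType disp) (lr : L -> L -> Prop) (c d : nat -> L) n
  (pd : planar_diagram lr) (lb : left_boundary lr c n) (rb : right_boundary lr d n)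
  (x a b : L) m l : (m <= n)%N -> (l <= n)%N -> a = x `|` c m -> b = x `|` d l ->
  covers x a -> covers x b -> a != b -> lr a b.
Proof.
move=> mn ln aE bE xa xb nab.
case: pd => H1 H2 H3 H4 H5.
case: lb => _ _ _ lbH; case: rb => _ _ _ rbH.
have nab' : ~~ (a <= b) := cov_ab xa xb nab.
have nba0 : b != a by rewrite eq_sym.
have nba' := cov_ab xb xa nba0.
have iab : incomp a b by split; apply/negP.
case: (H2 a b iab) => // lba; exfalso.
have cma : c m <= a by rewrite aE leUr.
have dlb : d l <= b by rewrite bE leUr.
have icb : incomp (c m) b.
  split=> h.
    by move/negP: nab'; apply; rewrite aE leUx (cov_le xb) h.
  by move/negP: nba'; apply; exact: (le_trans h cma).
have ida : incomp (d l) a.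
  split=> h.
    by move/negP: nba'; apply; rewrite bE leUx (cov_le xa) h.
  by move/negP: nab'; apply; exact: (le_trans h dlb).
have l1 := lbH m b mn icb.
have l2 := rbH l a ln ida.
have [ac|lca] := H5 a b (c m) (or_intror lba) (or_intror l1).
  have aE2 : a = c m by apply: le_anti; rewrite ac cma.
  have [bd|lbd] := H4 b a (d l) (or_intror lba) (or_intror l2).
    have bE2 : b = d l by apply: le_anti; rewrite bd dlb.
    rewrite aE2 bE2 in lba.
    have := lbH m (d l) mn (incompC (H1 _ _ lba)).
    by move=> h; apply: (H3 (c m) (d l)).
  by case: (H1 _ _ lbd) => _; apply.
by case: (H1 _ _ lca) => h _; apply: h.
Qed.

Lemma cell_mk disp (L : finTBLatticeType disp) (lr : L -> L -> Prop)
  (sl : slim (T := L)) (pd : planar_diagram lr) (o a b t : L) :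
  covers o a -> covers a t -> covers o b -> covers b t -> lr a b -> cell lr o a b t.
Proof.
move=> oa at' ob bt lab; split=> //; split=> // x ox xt xa xb _.
have nab := lr_neq pd lab.
have nax : ~~ (a <= x).
  apply/negP=> ax; have [E|E] := cov_mid at' ax (ltW xt).
    by apply: xa.
  by move: xt; rewrite E ltxx.
have nbx : ~~ (b <= x).
  apply/negP=> bx; have [E|E] := cov_mid bt bx (ltW xt).
    by apply: xb.
  by move: xt; rewrite E ltxx.
exact: (slim3 sl oa ob nab ox nax nbx).
Qed.

Lemma stuck disp (L : finTBLatticeType disp) (lr : L -> L -> Prop) (d : nat -> L) n
  (pd : planar_diagram lr) (rb : right_boundary lr d n) j :
  (j < n)%N -> forall e', ~ traj_step lr (d j, d j.+1) e'.
Proof.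
move=> jn e' [o [a [b [t [[_ _ _ _ [lab _]] He]]]]].
case: pd => H1 _ H3 _ _; case: rb => _ _ _ rbH.
have key : forall k, (k <= n)%N -> a = d k -> False.
  move=> k kn ak; rewrite ak in lab.
  have := rbH k b kn (H1 _ _ lab) => h.
  by apply: (H3 (d k) b).
case: He => [[E1 _]|[E1 _]].
  case: E1 => _ h; exact: (key j.+1 jn (esym h)).
case: E1 => h _; exact: (key j (ltnW jn) (esym h)).
Qed.

Inductive star (A : Type) (R : A -> A -> Prop) : A -> A -> Prop :=
  | star0 x : star R x x
  | starS x y z : R x y -> star R y z -> star R x z.

Lemma star_trans (A : Type) (R : A -> A -> Prop) x y z :
  star R x y -> star R y z -> star R x z.
Proof.
elim=> [//|x0 y0 z0 r _ IH] h; exact: starS r (IH h).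
Qed.

Lemma star_one (A : Type) (R : A -> A -> Prop) x y : x = y \/ R x y -> star R x y.
Proof. by case=> [->|h]; [exact: star0 | exact: starS h (star0 _ _)]. Qed.

Lemma star_seq (A : Type) (R : A -> A -> Prop) (x y : A) : star R x y ->
  exists es : seq A, (forall k, (k < size es)%N -> R (nth x (x :: es) k) (nth x es k))
                     /\ last x es = y.
Proof.
elim=> [x0|x0 y0 z0 r _ [es [H1 H2]]]; first by exists [::].
exists (y0 :: es); split=> //.
case=> [|k] //= klt.
have klt' : (k < size (y0 :: es))%N by rewrite /= ltnW.
rewrite (set_nth_default y0 x0 klt') (set_nth_default y0 x0 klt).
exact: H1 k klt.
Qed.

Lemma pi1_fwd disp (L : finTBLatticeType disp) (lr : L -> L -> Prop)
  (sl : slim (T := L)) (sm : semimodular (T := L)) (pd : planar_diagram lr)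
  (c d : nat -> L) n i j :
  chain_ok c n -> chain_ok d n -> (i < n)%N -> (j < n)%N ->
  pi1_rel lr c d i.+1 j.+1 -> Q c d i j.
Proof.
move=> hc hd ilt jlt [es /= [Hs Hl _]].
set e0 := (c i, c i.+1) in Hs Hl.
have inv : forall k, (k <= size es)%N -> forall w,
    ((nth e0 (e0 :: es) k).1 `|` w == (nth e0 (e0 :: es) k).2 `|` w) =
    (e0.1 `|` w == e0.2 `|` w).
  elim=> [//|k IH] kle w.
  rewrite -(IH (ltnW kle) w).
  by rewrite (step_inv sl pd w (Hs k kle)).
have key : forall w, (d j `|` w == d j.+1 `|` w) = (c i `|` w == c i.+1 `|` w).
  move=> w; have := inv (size es) (leqnn _) w.
  by rewrite -last_nth Hl.
have cle : c i <= c i.+1 by case: hc => _ _ cv; exact: cov_le (cv i ilt).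
rewrite (QC sm hc hd ilt jlt).
have k1 := key (c i); have k2 := key (c i.+1).
have ncc : (c i == c i.+1) = false.
  by apply/negbTE; case: hc => _ _ cv; exact: (cov_neq (cv i ilt)).
rewrite joinxx (join_idPl cle) ncc in k1.
rewrite joinxx (join_idPr cle) eqxx in k2.
by rewrite /E !(joinC (c i)) !(joinC (c i.+1)) k1 k2.
Qed.

Lemma boolA (a b c e : bool) : (a + b = c + e)%N -> a -> c -> e -> b.
Proof. by case: a; case: b; case: c; case: e. Qed.

Lemma boolB (a b c e : bool) : (a + b = c + e)%N -> a -> b -> c -> e.
Proof. by case: a; case: b; case: c; case: e. Qed.

Lemma neq_ab disp (L : finTBLatticeType disp) (a b t z : L) :
  a `|` z = t -> z <= b -> a != t -> a != b.
Proof.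
move=> h zb nat; apply/eqP=> ab; move/eqP: nat; apply.
by rewrite -h ab; apply/esym/join_idPl.
Qed.

Lemma pi1_bwd disp (L : finTBLatticeType disp) (lr : L -> L -> Prop)
  (sl : slim (T := L)) (sm : semimodular (T := L)) (pd : planar_diagram lr)
  (c d : nat -> L) n (lb : left_boundary lr c n) (rb : right_boundary lr d n) i j :
  (i < n)%N -> (j < n)%N -> Q c d i j -> pi1_rel lr c d i.+1 j.+1.
Proof.
move=> ilt jlt hQ.
have hc := lb_chain lb; have hd := rb_chain rb.
have hc' := hc; case: hc' => c0 cn cv.
have hd' := hd; case: hd' => d0 dn dv.
have hQ' := hQ; rewrite (QC sm hc hd ilt jlt) in hQ'.
case/andP: hQ' => Cij /eqP Ci1j.
case/andP: hQ => Rij /eqP Rij1.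
have Rall : forall k, (k <= j)%N -> E c d i k != E c d i.+1 k.
  move=> k kj; apply/eqP=> h; move/eqP: Rij; apply.
  exact: Rmono hd kj (ltnW jlt) h.
have Call : forall m, (m <= i)%N -> E c d m j != E c d m j.+1.
  move=> m mi; apply/eqP=> h; move/eqP: Cij; apply.
  exact: Cmono hc mi (ltnW ilt) h.
have up : forall k, (k <= j)%N ->
    star (traj_step lr) (E c d i 0, E c d i.+1 0) (E c d i k, E c d i.+1 k).
  elim=> [_|k IH kj]; first exact: star0.
  apply: star_trans (IH (ltnW kj)) _; apply: star_one.
  have kn : (k < n)%N := leq_trans kj (ltnW jlt).
  have [ob|nob] := eqVneq (E c d i k) (E c d i k.+1).
    left; rewrite ob; congr (_, _).
    exact: Cmono hc (leqnSn i) ilt ob.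
  right.
  have [_ coa] := Erstep sm d k hc ilt.
  have [_ cob] := Ecstep sm c i hd kn.
  have [_ cat] := Ecstep sm c i.+1 hd kn.
  have [_ cbt] := Erstep sm d k.+1 hc ilt.
  have oa := coa (Rall k (ltnW kj)).
  have ob := cob nob.
  have bt := cbt (Rall k.+1 kj).
  have nat : E c d i.+1 k != E c d i.+1 k.+1.
    exact: (boolA (grid_sq sm hc hd ilt kn) (Rall k (ltnW kj)) nob (Rall k.+1 kj)).
  have at' := cat nat.
  have dle : d k <= d k.+1 by exact: cov_le (dv k kn).
  have cle' : c i <= c i.+1 by exact: cov_le (cv i ilt).
  have nab : E c d i.+1 k != E c d i k.+1.
    apply: (neq_ab (z := d k.+1) _ _ nat).
      by rewrite -(Ecol c i.+1 dle).
    by rewrite /E leUr.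
  have lab : lr (E c d i.+1 k) (E c d i k.+1).
    exact: (G1 pd lb rb ilt kn (Erow d k cle') (Ecol c i dle) oa ob nab).
  exists (E c d i k), (E c d i.+1 k), (E c d i k.+1), (E c d i.+1 k.+1).
  split; first exact: (cell_mk sl pd oa at' ob bt lab).
  by left.
have down : forall m, (m <= i)%N ->
    star (traj_step lr) (E c d m j, E c d m j.+1) (E c d 0 j, E c d 0 j.+1).
  elim=> [_|m IH mi]; first exact: star0.
  apply: star_trans _ (IH (ltnW mi)); apply: star_one.
  have mn : (m < n)%N := leq_trans mi (ltnW ilt).
  have [oa|noa] := eqVneq (E c d m j) (E c d m.+1 j).
    left; rewrite -oa; congr (_, _).
    by apply/esym; exact: Rmono hd (leqnSn j) jlt oa.
  right.
  have [_ coa] := Erstep sm d j hc mn.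
  have [_ cob] := Ecstep sm c m hd jlt.
  have [_ cat] := Ecstep sm c m.+1 hd jlt.
  have [_ cbt] := Erstep sm d j.+1 hc mn.
  have oa := coa noa.
  have ob := cob (Call m (ltnW mi)).
  have at' := cat (Call m.+1 mi).
  have nbt : E c d m j.+1 != E c d m.+1 j.+1.
    exact: (boolB (grid_sq sm hc hd mn jlt) noa (Call m.+1 mi) (Call m (ltnW mi))).
  have bt := cbt nbt.
  have dle : d j <= d j.+1 by exact: cov_le (dv j jlt).
  have cle' : c m <= c m.+1 by exact: cov_le (cv m mn).
  have nat : E c d m.+1 j != E c d m.+1 j.+1 := Call m.+1 mi.
  have nab : E c d m.+1 j != E c d m j.+1.
    apply: (neq_ab (z := d j.+1) _ _ nat).
      by rewrite -(Ecol c m.+1 dle).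
    by rewrite /E leUr.
  have lab : lr (E c d m.+1 j) (E c d m j.+1).
    exact: (G1 pd lb rb mn jlt (Erow d j cle') (Ecol c m dle) oa ob nab).
  exists (E c d m j), (E c d m.+1 j), (E c d m j.+1), (E c d m.+1 j.+1).
  split; first exact: (cell_mk sl pd oa at' ob bt lab).
  by right.
have junc : (E c d i j, E c d i.+1 j) = (E c d i j, E c d i j.+1) by rewrite Ci1j Rij1.
have all : star (traj_step lr) (c i, c i.+1) (d j, d j.+1).
  have h1 := up j (leqnn j); rewrite junc in h1.
  have h2 := star_trans h1 (down i (leqnn i)).
  by move: h2; rewrite /E d0 c0 !joinx0 !join0x.
have [es [Hs Hl]] := star_seq all.
exists es => /=; split => //.
rewrite Hl; exact: (stuck pd rb jlt).
Qed.

Unset Implicit Arguments. Set Strict Implicit.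

Theorem proposition2p7 (disp : Order.disp_t) (L : finTBLatticeType disp)
  (n : nat) (lr : L -> L -> Prop) (c d : nat -> L) :
  slim (T := L) -> semimodular (T := L) -> lattice_length (T := L) n ->
  planar_diagram lr -> left_boundary lr c n -> right_boundary lr d n ->
  exists s : {perm 'I_n}, forall i j : 'I_n,
    [/\ pi1_rel lr c d i.+1 j.+1 <-> s i = j,
        pi2_rel c d n i.+1 j.+1 <-> s i = j
      & pi3_rel c d i.+1 j.+1 <-> s i = j].
Proof.
move=> sl sm _ pd lb rb.
have hc := lb_chain lb; have hd := rb_chain rb.
pose s := fun i : 'I_n => odflt i [pick j : 'I_n | Q c d i j].
have sQ : forall i : 'I_n, Q c d i (s i).
  move=> i; rewrite /s; case: pickP => [j //|H]; exfalso.
  have [j jn Qj] := Qex hc hd (ltn_ord i).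
  by move: (H (Ordinal jn)); rewrite /= Qj.
have s_inj : injective s.
  move=> i i' Es; apply: val_inj.
  apply: (Qcol sm hc hd (ltn_ord i) (ltn_ord i') (ltn_ord (s i)) (sQ i)).
  by rewrite Es; exact: (sQ i').
exists (perm s_inj) => i j.
rewrite permE.
have key : s i = j <-> Q c d i j.
  split=> [<-|Qj]; first exact: (sQ i).
  apply: val_inj; exact: (Qrow hd (ltn_ord _) (ltn_ord _) (sQ i) Qj).
split; split=> h.
- by apply/key; exact: (pi1_fwd sl sm pd hc hd (ltn_ord i) (ltn_ord j) h).
- exact: (pi1_bwd sl sm pd lb rb (ltn_ord i) (ltn_ord j) (proj1 key h)).
- by apply/key; exact: (pi2_fwd sl sm hc hd (ltn_ord i) (ltn_ord j) h).
- exact: (pi2_bwd sl sm hc hd (ltn_ord i) (ltn_ord j) (proj1 key h)).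
- by apply/key; apply/(pi3_iff sm hc hd (ltn_ord i) (ltn_ord j)).
- by apply/(pi3_iff sm hc hd (ltn_ord i) (ltn_ord j)); apply/key.
Qed.
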